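(* Assume the standing setup below with $m\ge 3$. Then every downset $S$ of $Q$ with $|S|=n$ such that $S\not\supseteq A\setminus X$ and $S\not\supseteq C\setminus X$ is isomorphic to $B$.
   Context: Standing setup: $\Gamma_n=\{A,B,C\}$ is a set of three pairwise non-isomorphic posets of size $n$, and $Q$ is a witness of $\Gamma_n$ (every downset of $Q$ of size $n$ is isomorphic to one of $A,B,C$, and each occurs). $G_n(Q)$ is the exchange graph: vertices are all downsets of $Q$ of size $n$ (as subsets), adjacent when they differ by exactly one element. A special path is a path $v_0,\ldots,v_r$ ($r\ge2$) in $G_n(Q)$ whose first vertex, internal vertices, and last vertex are isomorphic to three distinct members of $\Gamma_n$ respectively (all internal vertices isomorphic to the same member). Fix a special path of minimal length among all special paths in $G_n(Q)$, labelled so that $v_0\cong A$, $v_1,\ldots,v_{r-1}\cong B$, $v_r\cong C$; by abuse of notation $A:=v_0$ and $C:=v_r$ denote these specific downsets (anchor copies). Assume $Q$ equals the union of the vertices of this path (when $r\ge 3$ this union is $A\cup C$). Let $X=A\cap C$ and $m=|A\setminus X|=|C\setminus X|$. *)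

(* Defs.v *)
From mathcomp Require Import all_boot.
Set Implicit Arguments. Unset Strict Implicit. Unset Printing Implicit Defensive.

Definition partial_order (U : Type) (le : rel U) : Prop :=
  [/\ (forall x, le x x),
      (forall x y, le x y -> le y x -> x = y) &
      (forall x y z, le x y -> le y z -> le x z)].

Definition poset_iso (n : nat) (P P' : rel 'I_n) : Prop :=
  exists g : 'I_n -> 'I_n, bijective g /\ forall i j, P i j = P' (g i) (g j).

Section Q.
Variables (T : finType) (le : rel T).

Definition downset (S : {set T}) : Prop :=
  forall x y, y \in S -> le x y -> x \in S.

Definition iso_to (n : nat) (S : {set T}) (P : rel 'I_n) : Prop :=
  exists f : 'I_n -> T,
    [/\ injective f, [set f i | i : 'I_n] = S &
        forall i j, P i j = le (f i) (f j)].

(* Vertex of the exchange graph G_n(Q): a downset of size n. *)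
Definition gvertex (n : nat) (S : {set T}) : Prop := downset S /\ #|S| = n.

Definition gadj (U V : {set T}) : Prop := #|U :\: V| = 1 /\ #|V :\: U| = 1.

Definition gpath (n : nat) (w : nat -> {set T}) (k : nat) : Prop :=
  [/\ (forall i, i <= k -> gvertex n (w i)),
      (forall i, i < k -> gadj (w i) (w i.+1)) &
      (forall i j, i <= k -> j <= k -> w i = w j -> i = j)].

(* Special path w.r.t. Gamma_n = {G 0, G 1, G 2}, with first/internal/last
   vertices isomorphic to G a, G b, G c respectively. *)
Definition special_path_idx (n : nat) (G : 'I_3 -> rel 'I_n)
    (a b c : 'I_3) (w : nat -> {set T}) (k : nat) : Prop :=
  [/\ [/\ 2 <= k, gpath n w k & [/\ a != b, b != c & a != c]],
      iso_to (w 0) (G a),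
      (forall t, 0 < t < k -> iso_to (w t) (G b)) &
      iso_to (w k) (G c)].

Definition special_path (n : nat) (G : 'I_3 -> rel 'I_n)
    (w : nat -> {set T}) (k : nat) : Prop :=
  exists a b c : 'I_3, special_path_idx G a b c w k.

Definition witness (n : nat) (G : 'I_3 -> rel 'I_n) : Prop :=
  (forall S, gvertex n S -> exists t : 'I_3, iso_to S (G t)) /\
  (forall t : 'I_3, exists S, gvertex n S /\ iso_to S (G t)).
End Q.

(* Main.v *)
Require Import Defs.
From mathcomp Require Import all_boot zify.
From Stdlib Require Import ClassicalEpsilon.
Set Implicit Arguments. Unset Strict Implicit. Unset Printing Implicit Defensive.

Section Basics.
Variable T : finType.
Implicit Types U V W P : {set T}.

Lemma cardD_sym U W : #|U| = #|W| -> #|U :\: W| = #|W :\: U|.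
Proof. by move=> h; rewrite !cardsD h setIC. Qed.

Lemma cardD_tri U V W : #|U :\: W| <= #|U :\: V| + #|V :\: W|.
Proof.
apply: (@leq_trans #|(U :\: V) :|: (V :\: W)|).
  apply: subset_leq_card; apply/subsetP => x; rewrite !inE.
  by case: (x \in U); case: (x \in V); case: (x \in W).
by rewrite cardsU leq_subr.
Qed.

Lemma eq_diff0 U W : #|U| = #|W| -> #|U :\: W| = 0 -> U = W.
Proof.
move=> h /eqP; rewrite cards_eq0 setD_eq0 => sUW.
by apply/eqP; rewrite eqEcard sUW h leqnn.
Qed.

Lemma ex_minimal (R : rel T) P :
  (forall x, R x x) -> (forall x y, R x y -> R y x -> x = y) ->
  (forall x y z, R x y -> R y z -> R x z) ->
  P != set0 -> exists2 x, x \in P & forall y, y \in P -> R y x -> y = x.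
Proof.
move=> Rr Ra Rt /set0Pn [x0 Px0].
pose f x := #|[set y in P | R y x]|.
case: (@arg_minnP _ x0 (mem P) f Px0) => x Px xmin.
have {}Px : x \in P := Px.
exists x => // y Py Ryx.
apply/eqP/negPn/negP => nyx.
have: [set z in P | R z y] \proper [set z in P | R z x].
  apply/properP; split.
    apply/subsetP => z; rewrite !inE => /andP[-> Rzy] /=; exact: Rt Rzy Ryx.
  exists x; first by rewrite inE Px Rr.
  rewrite inE Px /=; apply/negP => Rxy.
  by rewrite (Ra _ _ Ryx Rxy) eqxx in nyx.
by move/proper_card; rewrite ltnNge xmin.
Qed.

End Basics.

Lemma all3 (t : 'I_3) : t = ord0 \/ t = inord 1 \/ t = inord 2.
Proof.
case: t => [[|[|[|k]]] Hk] //.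
- by left; apply: val_inj.
- by right; left; apply: val_inj; rewrite /= inordK.
- by right; right; apply: val_inj; rewrite /= inordK.
Qed.

Section Main.
Variables (T : finType) (le : rel T) (n : nat) (G : 'I_3 -> rel 'I_n) (r : nat).
Hypothesis Hle : partial_order le.
Hypothesis Hni : forall s t : 'I_3, s != t -> ~ poset_iso (G s) (G t).
Hypothesis Hwit : witness le G.
Hypothesis Hmin : forall (w : nat -> {set T}) (k : nat), special_path le G w k -> r <= k.

Implicit Types (U V W S p q : {set T}).

Definition vert S := gvertex le n S.

Definition col (S : {set T}) : 'I_3 :=
  if excluded_middle_informative (iso_to le S (G ord0)) then ord0
  else if excluded_middle_informative (iso_to le S (G (inord 1))) then inord 1
  else inord 2.

Lemma iso_uniq S s t : iso_to le S (G s) -> iso_to le S (G t) -> s = t.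
Proof.
move=> [f [finj fim fG]] [g [ginj gim gG]].
apply/eqP/negPn/negP => nst; apply: (Hni nst).
have ex i : exists j, g j = f i.
  have : f i \in S by rewrite -fim; apply/imsetP; exists i.
  by rewrite -gim => /imsetP [j _ ->]; exists j.
pose h i := odflt i [pick j | g j == f i].
have hP i : g (h i) = f i.
  rewrite /h; case: pickP => [j /eqP // | none].
  by case: (ex i) => j hj; move: (none j); rewrite hj eqxx.
exists h; split.
  by apply: injF_bij => i j hij; apply: finj; rewrite -!hP hij.
by move=> i j; rewrite fG gG !hP.
Qed.

Lemma col_eq S t : iso_to le S (G t) -> col S = t.
Proof.
move=> h; rewrite /col.
case: excluded_middle_informative => [h0|h0]; first exact: iso_uniq h0 h.
case: excluded_middle_informative => [h1|h1]; first exact: iso_uniq h1 h.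
case: (all3 t) => [e|[e|e]]; subst t => //.
Qed.

Lemma colP S : vert S -> iso_to le S (G (col S)).
Proof.
move=> vS; case: Hwit => hw _; case: (hw S vS) => t ht.
by rewrite (col_eq ht).
Qed.

Lemma special_le w k a b c : gpath le n w k -> 2 <= k ->
  a != b -> b != c -> a != c ->
  col (w 0) = a -> (forall t, 0 < t < k -> col (w t) = b) -> col (w k) = c ->
  r <= k.
Proof.
move=> gp k2 ab bc ac h0 hb hk; apply: (@Hmin w k); exists a, b, c.
have [vw _ _] := gp.
split; first by split => //; split.
- by rewrite -h0; apply: colP; apply: vw.
- move=> t /andP [t0 tk]; rewrite -(hb t); last by rewrite t0 tk.
  by apply: colP; apply: vw; apply: ltnW.
- by rewrite -hk; apply: colP; apply: vw.
Qed.

Lemma gadj_sym U W : gadj U W -> gadj W U.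
Proof. by case=> [h1 h2]; split. Qed.

Lemma path3 u v w : vert u -> vert v -> vert w -> gadj u v -> gadj v w ->
  col u != col v -> col v != col w -> col u != col w -> r <= 2.
Proof.
move=> vu vv vw auv avw cuv cvw cuw.
pose f i := if i == 0 then u else if i == 1 then v else w.
apply: (@special_le f 2 (col u) (col v) (col w)) => //.
- split.
  + by case=> [|[|[|i]]] //= _; first [exact: vu|exact: vv|exact: vw].
  + by case=> [|[|i]] //= _.
  + move=> i j hi hj e.
    case: i hi e => [|[|[|i]]] //= _; case: j hj => [|[|[|j]]] //= _ e;
    rewrite /f /= in e; by move: cuv cvw cuw; rewrite e !eqxx.
- by case=> [|[|t]].
Qed.


Lemma window w k i0 i1 b : gpath le n w k -> k < r -> i0 + 2 <= i1 -> i1 <= k ->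
  col (w i0) != b -> col (w i1) != b -> col (w i0) != col (w i1) ->
  (forall t, i0 < t < i1 -> col (w t) = b) -> False.
Proof.
move=> [vw aw dw] kr h2 h1k c0 c1 c01 hin.
pose w' t := w (i0 + t).
have: r <= i1 - i0.
  apply: (@special_le w' (i1 - i0) (col (w i0)) b (col (w i1))).
  - split.
    + by move=> t ht; apply: vw; lia.
    + by move=> t ht; rewrite /w' addnS; apply: aw; lia.
    + move=> t t' ht ht' e.
      have := dw (i0 + t) (i0 + t'); rewrite /w' in e; move=> /(_ _ _ e); lia.
  - lia.
  - exact: c0.
  - by rewrite eq_sym.
  - exact: c01.
  - by rewrite /w' addn0.
  - move=> t /andP [t0 t1]; rewrite /w'; apply: hin; apply/andP; split; lia.
  - by rewrite /w' subnKC //; lia.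
move=> h; lia.
Qed.

Lemma run_back (c : nat -> 'I_3) x l : c l = x ->
  exists s, [/\ s <= l, (forall t, s <= t -> t <= l -> c t = x) & (s = 0 \/ c s.-1 != x)].
Proof.
elim: l => [|l IH] cl.
  by exists 0; split => //; [move=> t _; rewrite leqn0 => /eqP -> | left].
case: (eqVneq (c l) x) => clx.
- have [s [sl hs s0]] := IH clx.
  exists s; split => //; first exact: leqW.
  move=> t st; rewrite leq_eqVlt => /orP [/eqP -> // | tl].
  exact: hs.
- exists l.+1; split => //; last by right.
  move=> t a b; have -> : t = l.+1 by apply/eqP; rewrite eqn_leq a b.
  exact: cl.
Qed.

Lemma two_cols w k : gpath le n w k -> k < r ->
  forall l, l <= k -> forall i j, i <= l -> j <= l ->
   [\/ col (w i) = col (w 0), col (w j) = col (w 0) | col (w i) = col (w j)].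
Proof.
move=> gp kr.
elim=> [|l IH] lk i j.
  by rewrite !leqn0 => /eqP -> /eqP ->; constructor 1.
have IH' := IH (ltnW lk).
have aux : forall i, i <= l ->
    [\/ col (w i) = col (w 0), col (w l.+1) = col (w 0) | col (w i) = col (w l.+1)].
  move=> i0 il.
  case: (eqVneq (col (w i0)) (col (w 0))) => [e|n1]; first by constructor 1.
  case: (eqVneq (col (w l.+1)) (col (w 0))) => [e|n2]; first by constructor 2.
  case: (eqVneq (col (w i0)) (col (w l.+1))) => [e|n3]; first by constructor 3.
  exfalso.
  case: (IH' i0 l il (leqnn l)) => [e|cl|cl]; first by rewrite e eqxx in n1.
  -
    have [s [sl hs s0]] := @run_back (fun t => col (w t)) _ _ cl.
    case: s0 => [s0|s0].
      by subst s; move: n1; rewrite (hs i0) // eqxx.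
    have s1 : 0 < s by move: s0; case: (s) => //=; rewrite eqxx.
    have cs : col (w s.-1) = col (w i0).
      case: (IH' i0 s.-1 il (leq_trans (leq_pred _) sl)) => [e|e|e]; first by rewrite e eqxx in n1.
      + by rewrite e eqxx in s0.
      + by rewrite e.
    apply: (@window w k s.-1 l.+1 (col (w 0)) gp kr) => //;
    first [ by rewrite addn2 prednK | by rewrite cs // eq_sym | by rewrite cs
               | by rewrite eq_sym
               | (move=> t /andP [a b]; apply: hs; [by rewrite -(prednK s1) | by rewrite -ltnS]) ].
  -
    have [s [sl hs s0]] := @run_back (fun t => col (w t)) _ _ (esym cl).
    case: s0 => [s0|s0].
      by subst s; move: n1; rewrite -(hs 0) ?eqxx.
    have s1 : 0 < s.
      case: (posnP s) => // s00; move: s0; rewrite s00 /=.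
      by rewrite (hs 0) ?s00 ?eqxx.
    have cs : col (w s.-1) = col (w 0).
      case: (IH' i0 s.-1 il (leq_trans (leq_pred _) sl)) => [e|e|e]; first by rewrite e eqxx in n1.
      + exact: e.
      + by rewrite /= -e eqxx in s0.
    apply: (@window w k s.-1 l.+1 (col (w i0)) gp kr) => //;
    first [ by rewrite addn2 prednK | by rewrite cs // eq_sym | by rewrite cs
               | by rewrite eq_sym
               | (move=> t /andP [a b]; apply: hs; [by rewrite -(prednK s1) | by rewrite -ltnS]) ].
move=> il jl.
case: (leqP i l) => il'; case: (leqP j l) => jl'.
- exact: IH'.
- have -> : j = l.+1 by apply/eqP; rewrite eqn_leq jl jl'.
  case: (aux i il') => e; [by constructor 1|by constructor 2|by constructor 3].
- have -> : i = l.+1 by apply/eqP; rewrite eqn_leq il il'.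
  case: (aux j jl') => e; [by constructor 2|by constructor 1|by constructor 3].
- have -> : i = l.+1 by apply/eqP; rewrite eqn_leq il il'.
  have -> : j = l.+1 by apply/eqP; rewrite eqn_leq jl jl'.
  by constructor 3.
Qed.

Lemma short_cols w k : gpath le n w k -> k < r -> col (w 0) != col (w k) ->
  forall i, i <= k -> col (w i) = col (w 0) \/ col (w i) = col (w k).
Proof.
move=> gp kr ne i ik.
case: (two_cols gp kr (leqnn k) ik (leqnn k)) => e; [by left| |by right].
by rewrite e eqxx in ne.
Qed.

Lemma vert_card S : vert S -> #|S| = n.
Proof. by case. Qed.

Lemma vert_down S : vert S -> downset le S.
Proof. by case. Qed.

Lemma mpath U W : vert U -> vert W -> exists w : nat -> {set T},
  [/\ w 0 = U, w #|U :\: W| = W,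
      (forall i, i <= #|U :\: W| -> [/\ vert (w i), U :&: W \subset w i,
           w i \subset U :|: W & #|w i :\: W| = #|U :\: W| - i]) &
      (forall i, i < #|U :\: W| -> gadj (w i) (w i.+1) /\ w i :&: W \subset w i.+1)].
Proof.
case: Hle => Rr Ra Rt.
move=> vU vW; move eqd: #|U :\: W| => d.
elim: d U vU eqd => [|d IH] U vU eqd.
  have eUW : U = W by apply: eq_diff0 => //; rewrite !vert_card.
  exists (fun _ => U); split; [by [] | exact: eUW | | by []].
  move=> i _; split; [exact: vU | exact: subsetIl | exact: subsetUl | by rewrite eqd].
have cU := vert_card vU; have cW := vert_card vW.
have nWU : W :\: U != set0.
  have cWU : #|W| = #|U| by rewrite cU cW.
  by rewrite -card_gt0 (cardD_sym cWU) eqd.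
have nUW : U :\: W != set0 by rewrite -card_gt0 eqd.
have [x xWU xmin] := ex_minimal Rr Ra Rt nWU.
have [u uUW umax] := @ex_minimal _ (fun a b => le b a) _ Rr
   (fun a b h1 h2 => Ra _ _ h2 h1) (fun a b c h1 h2 => Rt _ _ _ h2 h1) nUW.
move: (xWU) (uUW); rewrite !inE => /andP [xU xW] /andP [uW uU].
have dU := vert_down vU; have dW := vert_down vW.
have xU' := negbTE xU; have uW' := negbTE uW.
pose U' := x |: (U :\ u).
have vU' : vert U'.
  split.
  - move=> a b; rewrite !inE => /orP [/eqP -> | /andP [bu bU]] lab.
    + have aW : a \in W by apply: dW lab.
      case aU: (a \in U).
        rewrite andbT; apply/orP; right; apply/eqP => au; subst a.
        by rewrite (dW _ _ xW lab) in uW.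
      by rewrite (xmin a) ?eqxx // inE aW aU.
    + have aU : a \in U by apply: dU lab.
      apply/orP; right; rewrite aU andbT; apply/eqP => au; subst a.
      have bW : b \notin W by apply/negP => bW; rewrite (dW _ _ bW lab) in uW.
      have := umax b; rewrite inE bW bU => /(_ isT lab) bu'.
      by rewrite bu' eqxx in bu.
  - have := cardsD1 u U; rewrite uU cU => e.
    by rewrite cardsU1 !inE xU' andbF /= e.
have eqd' : #|U' :\: W| = d.
  have e : U' :\: W = (U :\: W) :\ u.
    apply/setP => y; rewrite !inE.
    case: (eqVneq y x) => [->|yx]; first by rewrite xW xU' !andbF.
    by rewrite orFb; case: (y \in W); case: (y \in U); case: (y == u).
  by move: eqd; rewrite (cardsD1 u (U :\: W)) uUW -e add1n => [[]].
have [w' [w0 wd wi wa]] := IH U' vU' eqd'.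
exists (fun i => if i is i'.+1 then w' i' else U); split => //.
- move=> [|i] hi.
    by split; [exact: vU | exact: subsetIl | exact: subsetUl | rewrite eqd].
  have [vi si si' ci] := wi i hi; split => //.
  + apply: subset_trans si; apply/subsetP => y; rewrite !inE => /andP [yU yW].
    rewrite yW yU !andbT; apply/orP; right; apply/eqP => yu; subst y.
    by rewrite yW in uW.
  + apply: subset_trans si' _; apply/subsetP => y; rewrite !inE.
    by case/orP => [/orP [/eqP -> | /andP [_ ->]] | ->]; rewrite ?xW ?orbT.
- move=> [|i] hi; last exact: wa.
  rewrite w0; split.
    split.
    + have -> : U :\: U' = [set u].
        apply/setP => y; rewrite !inE.
        case: (eqVneq y u) => [->|yu] /=.
          rewrite orbF uU andbT; apply/negP => /eqP e.
          by move: xU; rewrite -e uU.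
        by case: (y \in U); rewrite ?orbT ?andbF.
      by rewrite cards1.
    + have -> : U' :\: U = [set x].
        apply/setP => y; rewrite !inE.
        case: (eqVneq y x) => [->|yx] /=; first by rewrite xU'.
        by case: (y \in U); rewrite ?andbF.
      by rewrite cards1.
  apply/subsetP => y; rewrite !inE => /andP [yU yW].
  rewrite yU andbT; apply/orP; right; apply/eqP => yu; subst y.
  by rewrite yW in uW.
Qed.


Lemma mpath2 U W : vert U -> vert W -> exists w : nat -> {set T},
  [/\ w 0 = U, w #|U :\: W| = W, gpath le n w #|U :\: W|,
      (forall i, i <= #|U :\: W| -> [/\ U :&: W \subset w i,
           w i \subset U :|: W & #|w i :\: W| = #|U :\: W| - i]) &
      (forall i, i < #|U :\: W| -> w i :&: W \subset w i.+1)].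
Proof.
move=> vU vW; have [w [w0 wd wi wa]] := mpath vU vW.
exists w; split => //.
- split.
  + by move=> i hi; case: (wi i hi).
  + by move=> i hi; case: (wa i hi).
  + move=> i j hi hj e.
    have [_ _ _ ci] := wi i hi; have [_ _ _ cj] := wi j hj.
    move: ci cj; rewrite e => -> e2; lia.
- by move=> i hi; case: (wi i hi).
- by move=> i hi; case: (wa i hi).
Qed.

Lemma far_edge p q b : vert p -> vert q -> vert b -> gadj p q ->
  col b != col p -> col b != col q -> col p != col q -> r.-1 <= #|b :\: p|.
Proof.
move=> vp vq vb apq cbp cbq cpq.
rewrite leqNgt; apply/negP => hlt.
have [w [w0 wd gp _ _]] := mpath2 vb vp.
move: hlt wd gp; set d := #|b :\: p| => hlt wd gp.
have dr : d < r by lia.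
have sc := short_cols gp dr; rewrite w0 wd in sc; have {}sc := sc cbp.
pose w' i := if i <= d then w i else q.
have gp' : gpath le n w' d.+1.
  case: gp => vw aw dw; split.
  - move=> i hi; rewrite /w'; case: ifP => h; [exact: vw | exact: vq].
  - move=> i hi; rewrite /w'.
    case: (ltngtP i d) => h.
    + by apply: aw.
    + lia.
    + by subst i; rewrite wd.
  - move=> i j hi hj; rewrite /w'; case: ifP => hi'; case: ifP => hj'.
    + exact: dw.
    + move=> e; case: (sc i hi') => ce; move: ce; rewrite e => ce.
        by rewrite ce eqxx in cbq.
      by rewrite ce eqxx in cpq.
    + move=> e; case: (sc j hj') => ce; move: ce; rewrite -e => ce.
        by rewrite ce eqxx in cbq.
      by rewrite ce eqxx in cpq.
    + move=> _; lia.
have dr' : d.+1 < r by lia.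
have e0 : w' 0 = b by rewrite /w' leq0n w0.
have ed : w' d.+1 = q by rewrite /w' ifF //; apply/negbTE; rewrite -ltnNge.
have ed' : w' d = p by rewrite /w' leqnn wd.
have ne : col (w' 0) != col (w' d.+1) by rewrite e0 ed.
case: (short_cols gp' dr' ne (leqnSn d)); rewrite ?e0 ?ed ?ed' => e.
  by rewrite e eqxx in cbp.
by rewrite e eqxx in cpq.
Qed.

Lemma change_idx (c : nat -> 'I_3) k a : c 0 = a -> c k != a ->
  exists i, [/\ i < k, c i = a & c i.+1 != a].
Proof.
elim: k => [|k IH] c0 ck; first by rewrite c0 eqxx in ck.
case: (eqVneq (c k) a) => e.
  by exists k; split.
have [i [ik ci ci1]] := IH c0 e.
by exists i; split => //; apply: leqW.
Qed.

Lemma count2 (A C Y : {set T}) :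
  #|Y :\: A| + #|Y :\: C| = #|Y :\: (A :&: C)| + #|Y :\: (A :|: C)|.
Proof.
have e1 : (Y :\: A) :|: (Y :\: C) = Y :\: (A :&: C).
  by apply/setP => y; rewrite !inE; case: (y \in Y); case: (y \in A); case: (y \in C).
have e2 : (Y :\: A) :&: (Y :\: C) = Y :\: (A :|: C).
  by apply/setP => y; rewrite !inE; case: (y \in Y); case: (y \in A); case: (y \in C).
by rewrite -cardsUI e1 e2.
Qed.

Lemma cardsD_sub (X Y : {set T}) : X \subset Y -> #|Y :\: X| = #|Y| - #|X|.
Proof. by move=> sXY; rewrite cardsD (setIidPr sXY). Qed.

Lemma edge_bound A vA p q : vert A -> vert p -> vert q -> vert vA ->
  gadj vA A -> gadj p q ->
  col vA != col p -> col vA != col q -> col p != col q -> r.-2 <= #|A :\: p|.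
Proof.
move=> vA' vp vq vvA [a1 _] apq c1 c2 c3.
have h := far_edge vp vq vvA apq c1 c2 c3.
have := cardD_tri vA A p; rewrite a1 => h2.
lia.
Qed.


Lemma downI A C : downset le A -> downset le C -> downset le (A :&: C).
Proof.
move=> dA dC x y; rewrite !inE => /andP [yA yC] lxy.
by rewrite (dA _ _ yA lxy) (dC _ _ yC lxy).
Qed.

Lemma improve A C p : vert A -> vert C -> vert p ->
  (forall x, x \in A :|: C) ->
  ~~ (A :\: C \subset p) -> ~~ (A :&: C \subset p) ->
  exists b, [/\ vert b, gadj b p, #|(A :&: C) :\: b| < #|(A :&: C) :\: p|,
               ~~ (A :\: C \subset b) & ~~ (C :\: A \subset b)].
Proof.
case: Hle => Rr Ra Rt.
move=> vA vC vp cov nAp nXp.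
have dA := vert_down vA; have dC := vert_down vC; have dp := vert_down vp.
have dX := downI dA dC.
set X := A :&: C in nXp dX *.
have nX0 : X :\: p != set0.
  by apply/set0Pn; move/subsetPn: nXp => [z zX zp]; exists z; rewrite inE zX zp.
have [x xXp xmin] := ex_minimal Rr Ra Rt nX0.
move: (xXp); rewrite inE => /andP [xp xX].
have nAC0 : A :\: C != set0.
  apply/set0Pn; move/subsetPn: nAp => [z zA _]; by exists z.
pose D := if C :\: A \subset p then p :&: (C :\: A) else p :\: X.
have nD : D != set0.
  rewrite /D; case: ifP => hC.
    rewrite (setIidPr hC) -card_gt0.
    rewrite -(cardD_sym (_ : #|A| = #|C|)); last by rewrite !vert_card.
    by rewrite card_gt0.
  have hlt : #|X| < #|p|.
    rewrite (vert_card vp) -(vert_card vA).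
    apply: proper_card; apply/properP; split; first exact: subsetIl.
    by move/set0Pn: nAC0 => [z]; rewrite inE => /andP [zC zA]; exists z; rewrite // inE (negbTE zC) andbF.
  rewrite setD_eq0; apply/negP => /subset_leq_card.
  by rewrite leqNgt hlt.
have [y yD ymax] := @ex_minimal _ (fun a b => le b a) _ Rr
   (fun a b h1 h2 => Ra _ _ h2 h1) (fun a b c h1 h2 => Rt _ _ _ h2 h1) nD.
have [yp yX] : y \in p /\ y \notin X.
  move: yD; rewrite /D; case: ifP => _; rewrite !inE.
    by move=> /andP [-> /andP [yA _]]; split => //; rewrite (negbTE yA).
  by case/andP => h1 h2; split.
have ymaxp : forall z, z \in p -> le y z -> z = y.
  move=> z zp lyz; apply: ymax => //.
  rewrite /D; case: ifP => hC; rewrite !inE zp ?andbT.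
    move: yD; rewrite /D hC !inE => /and3P [_ yA yC].
    have zA : z \notin A by apply/negP => zA; rewrite (dA _ _ zA lyz) in yA.
    have zC : z \in C by have := cov z; rewrite inE (negbTE zA).
    by rewrite (negbTE zA) zC.
  apply/negP => zX.
  have zX' : z \in X by rewrite /X inE.
  by rewrite (dX _ _ zX' lyz) in yX.
have xy : x != y by apply/eqP => e; subst; rewrite xX in yX.
pose b := x |: (p :\ y).
exists b; split.
- split.
  + move=> a z; rewrite !inE => /orP [/eqP -> | /andP [zy zp]] laz.
    * have aX : a \in X by apply: dX laz.
      case ap: (a \in p).
        rewrite andbT; apply/orP; right; apply/eqP => ay; subst a.
        by rewrite aX in yX.
      by rewrite (xmin a) ?eqxx // inE aX ap.
    * have ap : a \in p by apply: dp laz.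
      rewrite ap andbT; apply/orP; right; apply/eqP => ay; subst a.
      by move: zy; rewrite (ymaxp z zp laz) eqxx.
  + have := cardsD1 y p; rewrite yp (vert_card vp) => e.
    by rewrite cardsU1 !inE (negbTE xp) andbF /= e.
- split.
  + have -> : b :\: p = [set x].
      apply/setP => z; rewrite !inE.
      case: (eqVneq z x) => [->|zx] /=; first by rewrite (negbTE xp).
      by case: (z \in p); rewrite ?andbF.
    by rewrite cards1.
  + have -> : p :\: b = [set y].
      apply/setP => z; rewrite !inE.
      case: (eqVneq z y) => [->|zy] /=; first by rewrite yp eq_sym (negbTE xy).
      by case: (z \in p); rewrite ?andbF ?andbT ?negb_or ?andbF //= ?orbT.
    by rewrite cards1.
- have -> : X :\: b = (X :\: p) :\ x.
    apply/setP => z; rewrite !inE.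
    case: (eqVneq z x) => [->|zx] /=; first by [].
    case: (eqVneq z y) => [->|zy] /=; last by [].
    by move: yX; rewrite /X inE => /negbTE ->; rewrite !andbF.
  by rewrite (cardsD1 x (X :\: p)) xXp.
- apply/negP => sAb; move/negP: nAp; apply; apply/subsetP => z zAC.
  have := subsetP sAb z zAC; rewrite !inE => /orP [/eqP zx|/andP [_ ->] //].
  subst z; move: zAC xX; rewrite !inE => /andP [zC _] /andP [_ xC].
  by rewrite xC in zC.
- rewrite /D in yD; case: ifP yD => hC yD.
    apply/negP => sCb.
    have yCA : y \in C :\: A by move: yD; rewrite inE => /andP [_ ->].
    move: (subsetP sCb y yCA); rewrite !inE eqxx /= orbF => /eqP yx.
    by rewrite yx eqxx in xy.
  apply/negP => sCb; move/negP: hC; apply; apply/subsetP => z zCA.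
  have := subsetP sCb z zCA; rewrite !inE => /orP [/eqP zx|/andP [_ ->] //].
  subst z; move: zCA xX; rewrite !inE => /andP [zA _] /andP [xA _].
  by rewrite xA in zA.
Qed.


Lemma cover3 (a b c t : 'I_3) : a != b -> b != c -> a != c ->
  [\/ t = a, t = b | t = c].
Proof.
case: (all3 t) => [->|[->|->]]; case: (all3 a) => [->|[->|->]];
case: (all3 b) => [->|[->|->]]; case: (all3 c) => [->|[->|->]]; rewrite ?eqxx //;
move=> *; first [by constructor 1|by constructor 2|by constructor 3].
Qed.

Lemma cardD1_ge (A : {set T}) x : #|A| <= #|A :\ x|.+1.
Proof. by rewrite (cardsD1 x A); case: (x \in A). Qed.

Lemma adj_of U W : vert U -> vert W -> U != W -> #|U :\: W| <= 1 -> gadj U W.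
Proof.
move=> vU vW nUW h.
have cUW : #|U| = #|W| by rewrite !vert_card.
have h1 : #|U :\: W| = 1.
  case: (posnP #|U :\: W|) => [e|p].
    by rewrite (eq_diff0 cUW e) eqxx in nUW.
  by apply/eqP; rewrite eqn_leq h p.
by split => //; rewrite -(cardD_sym cUW).
Qed.

Lemma gadj_card1 U W : gadj U W -> exists x, U :\: W = [set x].
Proof. by case=> [h _]; apply/cards1P; rewrite h. Qed.

Lemma p3F u v w : 3 <= r -> vert u -> vert v -> vert w -> gadj u v -> gadj v w ->
  col u != col v -> col v != col w -> col u != col w -> False.
Proof.
move=> r3 vu vv vw auv avw c1 c2 c3.
by have := path3 vu vv vw auv avw c1 c2 c3; rewrite leqNgt r3.
Qed.

Lemma m3_contra A C vA vC p q :
  vert A -> vert C -> vert vA -> vert vC -> vert p -> vert q ->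
  col p = col A -> col q = col C -> col vC = col vA ->
  col A != col vA -> col vA != col C -> col A != col C ->
  gadj vA A -> gadj vC C -> gadj vA vC -> gadj p q ->
  A :&: C \subset vA -> A :&: C \subset vC -> A :&: C \subset p ->
  p :&: C \subset q ->
  (forall x, x \in A :|: C) ->
  #|A :\: C| = 3 -> #|p :\: A| = 1 -> #|q :\: C| = 1 -> 3 <= r -> False.
Proof.
move=> vA' vC' vvA vvC vp vq cp cq cvC cAB cBC cAC avA avC avAC apq sXA sXC sXp spq cov
  m3 pA1 qC1 r3.
have dA := vert_down vA'; have dC := vert_down vC'; have dp := vert_down vp.
have dq := vert_down vq; have dvA := vert_down vvA; have dvC := vert_down vvC.
have cards : forall U W, vert U -> vert W -> #|U| = #|W|.
  by move=> U W h1 h2; rewrite !vert_card.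
have [a1 ea1] := gadj_card1 (gadj_sym avA).
have [k1 ek1] := gadj_card1 avA.
have a1A : a1 \in A by have := set11 a1; rewrite -ea1 inE => /andP [].
have a1vA : a1 \notin vA by have := set11 a1; rewrite -ea1 inE => /andP [].
have a1C : a1 \notin C.
  apply/negP => a1C; have : a1 \in A :&: C by rewrite inE a1A a1C.
  by move/(subsetP sXA); rewrite (negbTE a1vA).
have ink1 : forall z, z \in vA -> z \notin A -> z = k1.
  by move=> z z1 z2; apply/set1P; rewrite -ek1 inE z1 z2.
have inA1 : forall z, z \in A -> z != a1 -> z \in vA.
  move=> z zA za; apply/negPn/negP => zv.
  have : z \in A :\: vA by rewrite inE zv zA.
  by rewrite ea1 => /set1P e; rewrite e eqxx in za.
have [c3 ec3] := gadj_card1 (gadj_sym avC).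
have [a3 ea3] := gadj_card1 avC.
have a3vC : a3 \in vC by have := set11 a3; rewrite -ea3 inE => /andP [].
have a3C : a3 \notin C by have := set11 a3; rewrite -ea3 inE => /andP [].
have a3A : a3 \in A by have := cov a3; rewrite inE (negbTE a3C) orbF.
have ina3 : forall z, z \in vC -> z \notin C -> z = a3.
  by move=> z z1 z2; apply/set1P; rewrite -ea3 inE z1 z2.
have inC3 : forall z, z \in C -> z != c3 -> z \in vC.
  move=> z zC zc; apply/negPn/negP => zv.
  have : z \in C :\: vC by rewrite inE zv zC.
  by rewrite ec3 => /set1P e; rewrite e eqxx in zc.
have c3C : c3 \in C by have := set11 c3; rewrite -ec3 inE => /andP [].
have c3vC : c3 \notin vC by have := set11 c3; rewrite -ec3 inE => /andP [].
have c3A : c3 \notin A.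
  apply/negP => c3A; have : c3 \in A :&: C by rewrite inE c3A c3C.
  by move/(subsetP sXC); rewrite (negbTE c3vC).
have k1A : k1 \notin A by have := set11 k1; rewrite -ek1 inE => /andP [].
have a13 : a1 != a3.
  apply/eqP => e; subst a3.
  case: avAC => _ h.
  pose E := ((C :\: A) :\ c3) :\ k1.
  have cCA : #|C :\: A| = 3.
    by rewrite -(cardD_sym (cards A C vA' vC')).
  have cE : 1 <= #|E|.
    have h1 := cardD1_ge (C :\: A) c3; have h2 := cardD1_ge ((C :\: A) :\ c3) k1.
    rewrite cCA in h1.
    have h3 : 2 <= #|(C :\: A) :\ c3| by rewrite -ltnS.
    by have := leq_trans h3 h2; rewrite ltnS.
  have sE : a1 |: E \subset vC :\: vA.
    apply/subsetP => z; rewrite !inE => /orP [/eqP -> | /and3P [zk zc /andP [zA zC]]].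
      by rewrite a3vC a1vA.
    rewrite (inC3 z zC zc) andbT; apply/negP => zv.
    by move: zk; rewrite (ink1 z zv zA) eqxx.
  have : 2 <= #|vC :\: vA|.
    apply: leq_trans (subset_leq_card sE).
    rewrite cardsU1; have -> : a1 \notin E by rewrite !inE a1A !andbF.
    by rewrite add1n ltnS.
  by rewrite h.
have npA : p != A by apply/eqP => e; rewrite e setDv cards0 in pA1.
have [k ek] := gadj_card1 (adj_of vp vA' npA (eq_leq pA1)).
have kp : k \in p by have := set11 k; rewrite -ek inE => /andP [].
have kA : k \notin A by have := set11 k; rewrite -ek inE => /andP [].
have kC : k \in C by have := cov k; rewrite inE (negbTE kA).
have inpA : forall z, z \in p -> z \notin A -> z = k.
  by move=> z z1 z2; apply/set1P; rewrite -ek inE z1 z2.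
have Ap1 : #|A :\: p| = 1 by rewrite -(cardD_sym (cards p A vp vA')).
have Cq1 : #|C :\: q| = 1 by rewrite -(cardD_sym (cards q C vq vC')).
have [c ec] : exists c, C :\: q = [set c] by apply/cards1P; rewrite Cq1.
have cC : c \in C by have := set11 c; rewrite -ec inE => /andP [].
have cnq : c \notin q by have := set11 c; rewrite -ec inE => /andP [].
have inCq : forall z, z \in C -> z != c -> z \in q.
  move=> z zC zc; apply/negPn/negP => zq.
  have : z \in C :\: q by rewrite inE zq zC.
  by rewrite ec => /set1P e; rewrite e eqxx in zc.
have kq : k \in q by apply: (subsetP spq); rewrite inE kp kC.
have kc : k != c by apply/eqP => e; subst; rewrite kq in cnq.
have cA : c \notin A.
  apply/negP => cA; have : c \in A :&: C by rewrite inE cA cC.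
  move/(subsetP sXp) => cpp.
  have : c \in q by apply: (subsetP spq); rewrite inE cpp cC.
  by rewrite (negbTE cnq).
pose y2 := k |: (A :\ a1).
have vy2 : vert y2.
  split.
  - move=> t z; rewrite !inE => /orP [/eqP -> | /andP [za zA]] ltz.
    + have tp : t \in p by apply: dp ltz.
      have tC : t \in C by apply: dC ltz.
      case tA: (t \in A).
        rewrite andbT; apply/orP; right; apply/eqP => e; subst t.
        by rewrite tC in a1C.
      by rewrite (inpA t tp (negbT tA)) eqxx.
    + have tA : t \in A by apply: dA ltz.
      rewrite tA andbT; apply/orP; right; apply/eqP => e; subst t.
      by move: a1vA; rewrite (dvA _ _ (inA1 z zA za) ltz).
  - have := cardsD1 a1 A; rewrite a1A (vert_card vA') => e.
    by rewrite cardsU1 !inE (negbTE kA) andbF /= e.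
have ay2A : gadj y2 A.
  apply: adj_of => //.
    by apply/eqP => e; move: kA; rewrite -e !inE eqxx.
  have -> : y2 :\: A = [set k].
    apply/setP => z; rewrite !inE; case: (eqVneq z k) => [->|zk] /=.
      by rewrite (negbTE kA).
    by case: (z \in A); rewrite ?andbF ?andbT.
  by rewrite cards1.
have cy2C : col y2 != col C.
  apply/eqP => e; apply: (p3F r3 vvA vA' vy2 avA (gadj_sym ay2A));
  [by rewrite eq_sym | by rewrite e | by rewrite e].
have cy2B : col y2 != col vA.
  apply/eqP => e.
  have ny2p : y2 != p.
    by apply/eqP => e'; move: e; rewrite e' cp => /eqP; rewrite (negbTE cAB).
  have ay2p : gadj y2 p.
    apply: adj_of => //.
    apply: (leq_trans _ (eq_leq Ap1)); apply: subset_leq_card; apply/subsetP => z.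
    rewrite !inE => /andP [zp /orP [/eqP zk | /andP [_ zA]]].
      by subst z; rewrite kp in zp.
    by rewrite zA zp.
  apply: (p3F r3 vy2 vp vq ay2p apq);
  [by rewrite e cp eq_sym | by rewrite cp cq | by rewrite e cq].
have cy2 : col y2 = col A.
  case: (cover3 (col y2) cAB cBC cAC) => e //.
    by rewrite e eqxx in cy2B.
  by rewrite e eqxx in cy2C.
have ay2vA : gadj vA y2.
  apply: gadj_sym; apply: adj_of => //.
    by apply/eqP => e; move: cy2B; rewrite e eqxx.
  apply: (@leq_trans #|[set k]|); last by rewrite cards1.
  apply: subset_leq_card; apply/subsetP => z.
  rewrite !inE => /andP [zv /orP [-> // | /andP [za zA]]].
  by rewrite (inA1 z zA za) in zv.
pose w1 := a3 |: (C :\ c).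
have vw1 : vert w1.
  split.
  - move=> t z; rewrite !inE => /orP [/eqP -> | /andP [zc zC]] ltz.
    + have tv : t \in vC by apply: dvC ltz.
      have tA : t \in A by apply: dA ltz.
      case tC: (t \in C).
        rewrite andbT; apply/orP; right; apply/eqP => e; subst t.
        by rewrite tA in cA.
      by rewrite (ina3 t tv (negbT tC)) eqxx.
    + have tC : t \in C by apply: dC ltz.
      rewrite tC andbT; apply/orP; right; apply/eqP => e; subst t.
      by move: cnq; rewrite (dq _ _ (inCq z zC zc) ltz).
  - have := cardsD1 c C; rewrite cC (vert_card vC') => e.
    by rewrite cardsU1 !inE (negbTE a3C) andbF /= e.
have aw1C : gadj w1 C.
  apply: adj_of => //.
    by apply/eqP => e; move: a3C; rewrite -e !inE eqxx.
  have -> : w1 :\: C = [set a3].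
    apply/setP => z; rewrite !inE; case: (eqVneq z a3) => [->|za] /=.
      by rewrite (negbTE a3C).
    by case: (z \in C); rewrite ?andbF ?andbT.
  by rewrite cards1.
have cw1A : col w1 != col A.
  apply/eqP => e; apply: (p3F r3 vvC vC' vw1 avC (gadj_sym aw1C));
  [by rewrite cvC | by rewrite e eq_sym | by rewrite cvC e eq_sym].
have cw1B : col w1 != col vA.
  apply/eqP => e.
  have nw1q : w1 != q.
    by apply/eqP => e'; move: e; rewrite e' cq => /eqP; rewrite eq_sym (negbTE cBC).
  have aw1q : gadj w1 q.
    apply: adj_of => //.
    apply: (@leq_trans #|[set a3]|); last by rewrite cards1.
    apply: subset_leq_card; apply/subsetP => z.
    rewrite !inE => /andP [zq /orP [-> // | /andP [zc zC]]].
    by rewrite (inCq z zC zc) in zq.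
  apply: (p3F r3 vw1 vq vp aw1q (gadj_sym apq));
  [by rewrite e cq | by rewrite cq cp eq_sym | by rewrite e cp eq_sym].
have cw1 : col w1 = col C.
  case: (cover3 (col w1) cAB cBC cAC) => e //.
    by rewrite e eqxx in cw1A.
  by rewrite e eqxx in cw1B.
have ay2w1 : gadj y2 w1.
  apply: adj_of => //.
    by apply/eqP => e; move: cAC; rewrite -cy2 -cw1 e eqxx.
  have a3AC : a3 \in (A :\: C) :\ a1 by rewrite !inE a3A a3C eq_sym a13.
  have a1AC : a1 \in A :\: C by rewrite !inE a1A a1C.
  have e1 := cardsD1 a1 (A :\: C); rewrite a1AC m3 in e1.
  have e2 := cardsD1 a3 ((A :\: C) :\ a1); rewrite a3AC in e2.
  apply: (@leq_trans #|((A :\: C) :\ a1) :\ a3|); last first.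
    move: e1 e2; rewrite /= !add1n => [[<-]] [->]; by [].
  apply: subset_leq_card; apply/subsetP => z.
  rewrite !inE => /andP [zw /orP [/eqP zk | /andP [za zA]]].
    subst z; move: zw; rewrite kC kc /=.
    by rewrite orbT.
  move: zw; rewrite negb_or => /andP [/negbTE -> zw] /=.
  rewrite za zA andbT /=; apply/negP => zC.
  move: zw; rewrite zC andbT; apply/negP; apply/negPn.
  by apply/eqP => e; subst z; rewrite zA in cA.
apply: (p3F r3 vvA vy2 vw1 ay2vA ay2w1);
[by rewrite cy2 eq_sym | by rewrite cy2 cw1 | by rewrite cw1].
Qed.


Lemma setD_I (A C : {set T}) : A :\: (A :&: C) = A :\: C.
Proof. by rewrite setDIr setDv set0U. Qed.

Lemma arith rr x2 x3 x5 m i d : rr.-2 <= x2 -> rr.-2 <= x5 -> x2 + x3 = m -> x3 = d - i ->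
  x5 = d - i.+1 -> 3 <= m -> m <= rr -> i < d -> [/\ rr = 3, m = 3, x2 = 1 & x5 = 1].
Proof. move=> *; split; lia. Qed.

Lemma core A C vA vC S :
  vert A -> vert C -> vert vA -> vert vC ->
  col A != col vA -> col vA != col C -> col A != col C -> col vC = col vA ->
  gadj vA A -> gadj vC C ->
  A :&: C \subset vA -> A :&: C \subset vC ->
  (r = 3 -> gadj vA vC) ->
  (forall x, x \in A :|: C) ->
  3 <= #|A :\: C| -> #|A :\: C| <= r ->
  (forall Y, vert Y -> #|(A :&: C) :\: Y| < #|(A :&: C) :\: S| ->
     ~~ (A :\: C \subset Y) -> ~~ (C :\: A \subset Y) -> col Y = col vA) ->
  vert S -> ~~ (A :\: C \subset S) -> ~~ (C :\: A \subset S) -> col S != col A.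
Proof.
move=> vA' vC' vvA vvC cAB cBC cAC cvC avA avC sXA sXC hr3 cov m3 mr IH vS nAS nCS.
apply/eqP => cS.
have r3 : 3 <= r := leq_trans m3 mr.
have [w [w0 wd gp wi wa]] := mpath2 vS vC'.
move: wd gp wi wa; set d := #|S :\: C| => wd gp wi wa.
have dm : d < #|A :\: C|.
  apply: proper_card; apply/properP; split.
    apply/subsetP => z; rewrite !inE => /andP [zC zS]; rewrite zC /=.
    by have := cov z; rewrite inE (negbTE zC) orbF.
  move/subsetPn: nAS => [z zAC zS]; exists z => //.
  by rewrite inE (negbTE zS) andbF.
have dr : d < r by apply: leq_trans dm mr.
have ne : col (w 0) != col (w d) by rewrite w0 wd cS.
have sc := short_cols gp dr ne; rewrite w0 wd cS in sc.
have h0 : col (w 0) = col A by rewrite w0 cS.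
have hd : col (w d) != col A by rewrite wd eq_sym.
have [i [id ci ci1]] := @change_idx (fun t => col (w t)) d (col A) h0 hd.
have cq : col (w i.+1) = col C.
  by case: (sc i.+1 id) => // e; rewrite /= e eqxx in ci1.
move: ci cq; set p := w i; set q := w i.+1 => cp cq.
have [vw aw _] := gp.
have vp : vert p by apply: vw; apply: ltnW.
have vq : vert q by apply: vw.
have apq : gadj p q by apply: aw.
have [sSCp psub cpC] := wi i (ltnW id).
have [_ _ cqC] := wi i.+1 id.
have spq : p :&: C \subset q by apply: wa.
have nAp : ~~ (A :\: C \subset p).
  apply/negP => sAp; move/negP: nAS; apply; apply/subsetP => z zAC.
  have := subsetP psub z (subsetP sAp z zAC); rewrite inE => /orP [//| zC].
  by move: zAC; rewrite inE zC.
case: (boolP (A :&: C \subset p)) => sXp.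
- have h1 : col vA != col p by rewrite cp eq_sym.
  have h2 : col vA != col q by rewrite cq.
  have h3 : col p != col q by rewrite cp cq.
  have h4 : col vC != col q by rewrite cq cvC.
  have h5 : col vC != col p by rewrite cp cvC eq_sym.
  have h6 : col q != col p by rewrite cp cq eq_sym.
  have b1 := edge_bound vA' vp vq vvA avA apq h1 h2 h3.
  have b2 := edge_bound vC' vq vp vvC avC (gadj_sym apq) h4 h5 h6.
  have e1 := count2 A C p.
  have e2 : #|p :\: (A :|: C)| = 0.
    apply/eqP; rewrite cards_eq0 setD_eq0; apply/subsetP => z _; exact: cov.
  have e3 := cardsD_sub sXp; rewrite (vert_card vp) in e3.
  have e4 : #|A :\: C| = n - #|A :&: C| by rewrite cardsD (vert_card vA').
  have e5 : #|A :\: p| = #|p :\: A| by apply: cardD_sym; rewrite !vert_card.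
  have e6 : #|C :\: q| = #|q :\: C| by apply: cardD_sym; rewrite !vert_card.
  rewrite e2 e3 addn0 -e4 in e1.
  rewrite e5 in b1; rewrite e6 in b2.
  have [hr hm hx2 hx5] := arith b1 b2 e1 cpC cqC m3 mr id.
  apply: (m3_contra vA' vC' vvA vvC vp vq cp cq cvC cAB cBC cAC avA avC (hr3 hr) apq
     sXA sXC sXp spq cov hm hx2 hx5 r3).
- have [b [vb abp cb nAb nCb]] := improve vA' vC' vp cov nAp sXp.
  have sXpS : #|(A :&: C) :\: p| <= #|(A :&: C) :\: S|.
    apply: subset_leq_card; apply/subsetP => z; rewrite !inE => /andP [zp /andP [zA zC]].
    rewrite zA zC !andbT; apply/negP => zS.
    by move: zp; rewrite (subsetP sSCp z) // inE zS zC.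
  have cb' := IH b vb (leq_trans cb sXpS) nAb nCb.
  apply: (p3F r3 vb vp vq abp apq); [by rewrite cb' cp eq_sym | by rewrite cp cq | by rewrite cb' cq].
Qed.


Lemma arith2 rr x2 x3 x5 m i : rr.-2 <= x2 -> rr.-2 <= x5 -> x2 + x3 = m -> x3 = m - i ->
  x5 = m - i.+1 -> i < m -> m < rr -> 3 <= m -> False.
Proof. move=> *; lia. Qed.

Lemma arith3 a b t rr y z x m : a <= t -> b <= rr - t -> t <= rr -> rr = m ->
  a + b = (n - y) + z -> y <= x -> m = n - x -> x <= n -> z = 0 /\ y = x.
Proof. move=> *; lia. Qed.

Lemma ord3_ne : [/\ (ord0 : 'I_3) != inord 1, (inord 1 : 'I_3) != inord 2
                  & (ord0 : 'I_3) != inord 2].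
Proof.
by split; apply/eqP => /(congr1 val); rewrite /= ?inordK.
Qed.

Lemma main_sec (v : nat -> {set T}) :
  special_path_idx le G ord0 (inord 1) (inord 2) v r ->
  [set: T] = \bigcup_(i < r.+1) v i ->
  3 <= #|v 0 :\: (v 0 :&: v r)| ->
  forall S, vert S -> ~~ (v 0 :\: (v 0 :&: v r) \subset S) ->
    ~~ (v r :\: (v 0 :&: v r) \subset S) -> iso_to le S (G (inord 1)).
Proof.
move=> [[r2 gpv dabc] isoA isoB isoC] Hun Hm S vS nA nC.
have [vv av dv] := gpv.
have [c01 c12 c02] := ord3_ne.
have cA : col (v 0) = ord0 := col_eq isoA.
have cC : col (v r) = inord 2 := col_eq isoC.
have cB : forall t, 0 < t < r -> col (v t) = inord 1 := fun t h => col_eq (isoB t h).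
have vA := vv 0 (leq0n r); have vC := vv r (leqnn r).
rewrite setD_I in Hm nA; rewrite setIC setD_I in nC.
have tri1 : forall t, t <= r -> #|v 0 :\: v t| <= t.
  elim=> [|t IH] ht; first by rewrite setDv cards0.
  apply: leq_trans (cardD_tri (v 0) (v t) (v t.+1)) _.
  have [h _] := av t ht.
  by rewrite h addn1 ltnS IH // ltnW.
have tri2 : forall k, k <= r -> #|v (r - k) :\: v r| <= k.
  elim=> [|k IH] hk; first by rewrite subn0 setDv cards0.
  apply: leq_trans (cardD_tri (v (r - k.+1)) (v (r - k)) (v r)) _.
  have hk' : r - k.+1 < r by lia.
  have [h _] := av (r - k.+1) hk'.
  have e : (r - k.+1).+1 = r - k by lia.
  rewrite e in h.
  by rewrite h add1n ltnS IH // ltnW.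
have mr : #|v 0 :\: v r| <= r := tri1 r (leqnn r).
have cAC : #|v 0| = #|v r| by rewrite !vert_card.
have cCA : #|v r :\: v 0| = #|v 0 :\: v r| by rewrite (cardD_sym cAC).
have r3 : 3 <= r := leq_trans Hm mr.
have h1r : 0 < 1 < r by rewrite /=; lia.
have hr1 : 0 < r.-1 < r by apply/andP; split; lia.
have c1 : col (v 1) = inord 1 := cB 1 h1r.
have cr1 : col (v r.-1) = inord 1 := cB r.-1 hr1.
have v1 : vert (v 1) by apply: vv; lia.
have vr1 : vert (v r.-1) by apply: vv; lia.
have a1 : gadj (v 1) (v 0) by apply: gadj_sym; apply: av; lia.
have ar1 : gadj (v r.-1) (v r).
  have h : r.-1 < r by lia.
  by have := av r.-1 h; rewrite prednK //; lia.
have rm : r <= #|v 0 :\: v r|.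
  rewrite leqNgt; apply/negP => hlt.
  have [w [w0 wd gp wi wa]] := mpath2 vA vC.
  move: wd gp wi wa hlt; set d := #|v 0 :\: v r| => wd gp wi wa hlt.
  have ne : col (w 0) != col (w d) by rewrite w0 wd cA cC.
  have sc := short_cols gp hlt ne; rewrite w0 wd in sc.
  have h0 : col (w 0) = col (v 0) by rewrite w0.
  have hd : col (w d) != col (v 0) by rewrite wd cA cC eq_sym.
  have [i [id ci ci1]] := @change_idx (fun t => col (w t)) d (col (v 0)) h0 hd.
  have cq : col (w i.+1) = col (v r).
    by case: (sc i.+1 id) => // e; rewrite /= e eqxx in ci1.
  move: ci cq; set p := w i; set q := w i.+1 => cp cq.
  have [vw aw _] := gp.
  have vp : vert p by apply: vw; apply: ltnW.
  have vq : vert q by apply: vw.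
  have apq : gadj p q by apply: aw.
  have [sXp psub cpC] := wi i (ltnW id).
  have [_ _ cqC] := wi i.+1 id.
  have g1 : col (v 1) != col p by rewrite c1 cp cA eq_sym.
  have g2 : col (v 1) != col q by rewrite c1 cq cC.
  have g3 : col p != col q by rewrite cp cq cA cC.
  have g4 : col (v r.-1) != col q by rewrite cr1 cq cC.
  have g5 : col (v r.-1) != col p by rewrite cr1 cp cA eq_sym.
  have g6 : col q != col p by rewrite cp cq cA cC eq_sym.
  have b1 := edge_bound vA vp vq v1 a1 apq g1 g2 g3.
  have b2 := edge_bound vC vq vp vr1 ar1 (gadj_sym apq) g4 g5 g6.
  have e1 := count2 (v 0) (v r) p.
  have e2 : #|p :\: (v 0 :|: v r)| = 0.
    by apply/eqP; rewrite cards_eq0 setD_eq0.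
  have e3 := cardsD_sub sXp; rewrite (vert_card vp) in e3.
  have e4 : #|v 0 :\: v r| = n - #|v 0 :&: v r| by rewrite cardsD (vert_card vA).
  have e5 : #|v 0 :\: p| = #|p :\: v 0| by apply: cardD_sym; rewrite !vert_card.
  have e6 : #|v r :\: q| = #|q :\: v r| by apply: cardD_sym; rewrite !vert_card.
  rewrite e2 e3 addn0 -e4 in e1.
  rewrite e5 in b1; rewrite e6 in b2.
  exact: (arith2 b1 b2 e1 cpC cqC id hlt Hm).
have rm' : #|v 0 :\: v r| = r by apply/eqP; rewrite eqn_leq mr rm.
have sub_t : forall t, t <= r -> v t \subset v 0 :|: v r /\ v 0 :&: v r \subset v t.
  move=> t ht.
  have h1 := tri1 t ht.
  have h2 := tri2 (r - t) (leq_subr t r); rewrite subKn // in h2.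
  have vt := vv t ht.
  have s1 : #|v 0 :\: v t| = #|v t :\: v 0| by apply: cardD_sym; rewrite !vert_card.
  rewrite s1 in h1.
  have e := count2 (v 0) (v r) (v t).
  have e' : #|v t :\: (v 0 :&: v r)| = n - #|v t :&: (v 0 :&: v r)|.
    by rewrite cardsD (vert_card vt).
  rewrite e' in e.
  have le1 : #|v t :&: (v 0 :&: v r)| <= #|v 0 :&: v r|.
    by apply: subset_leq_card; apply: subsetIr.
  have le2 : #|v 0 :&: v r| <= n by rewrite -(vert_card vA); apply: subset_leq_card; apply: subsetIl.
  have e4 : #|v 0 :\: v r| = n - #|v 0 :&: v r| by rewrite cardsD (vert_card vA).
  have [z0 yx] := arith3 h1 h2 ht (esym rm') e le1 e4 le2.
  split.
    by move/eqP: z0; rewrite cards_eq0 setD_eq0.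
  have : v t :&: (v 0 :&: v r) == v 0 :&: v r.
    by rewrite eqEcard subsetIr yx leqnn.
  by move/eqP => <-; apply: subsetIl.
have cov : forall x, x \in v 0 :|: v r.
  move=> x; have : x \in [set: T] by rewrite inE.
  rewrite Hun => /bigcupP [i _ xi].
  have [s _] := sub_t i (ltn_ord i).
  exact: (subsetP s x xi).
have sX1 : v 0 :&: v r \subset v 1 by case: (sub_t 1 (ltnW (ltnW r3))).
have sXr1 : v 0 :&: v r \subset v r.-1 by case: (sub_t r.-1 (leq_pred r)).
have hr3 : r = 3 -> gadj (v 1) (v r.-1).
  by move=> e; rewrite e /=; apply: av; rewrite e.
have step : forall S', vert S' ->
    (forall Y, vert Y -> #|(v 0 :&: v r) :\: Y| < #|(v 0 :&: v r) :\: S'| ->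
       ~~ (v 0 :\: v r \subset Y) -> ~~ (v r :\: v 0 \subset Y) -> col Y = inord 1) ->
    ~~ (v 0 :\: v r \subset S') -> ~~ (v r :\: v 0 \subset S') -> col S' = inord 1.
  move=> S' vS' IH nA' nC'.
  have k1 : col (v 0) != col (v 1) by rewrite cA c1.
  have k2 : col (v 1) != col (v r) by rewrite c1 cC.
  have k3 : col (v 0) != col (v r) by rewrite cA cC.
  have k4 : col (v r.-1) = col (v 1) by rewrite c1 cr1.
  have IH1 : forall Y, vert Y -> #|(v 0 :&: v r) :\: Y| < #|(v 0 :&: v r) :\: S'| ->
       ~~ (v 0 :\: v r \subset Y) -> ~~ (v r :\: v 0 \subset Y) -> col Y = col (v 1).
    by move=> Y vY hY nAY nCY; rewrite c1; apply: IH.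
  have n0 : col S' != col (v 0)
    := core vA vC v1 vr1 k1 k2 k3 k4 a1 ar1 sX1 sXr1 hr3 cov Hm mr IH1 vS' nA' nC'.
  have l1 : col (v r) != col (v r.-1) by rewrite cC cr1 eq_sym.
  have l2 : col (v r.-1) != col (v 0) by rewrite cr1 cA eq_sym.
  have l3 : col (v r) != col (v 0) by rewrite cA cC eq_sym.
  have l4 : col (v 1) = col (v r.-1) by rewrite c1 cr1.
  have sX1' : v r :&: v 0 \subset v r.-1 by rewrite setIC.
  have sXr1' : v r :&: v 0 \subset v 1 by rewrite setIC.
  have hr3' : r = 3 -> gadj (v r.-1) (v 1) by move=> e; apply: gadj_sym; apply: hr3.
  have cov' : forall x, x \in v r :|: v 0 by move=> x; rewrite setUC.
  have Hm' : 3 <= #|v r :\: v 0| by rewrite cCA.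
  have mr' : #|v r :\: v 0| <= r by rewrite cCA.
  have IH2 : forall Y, vert Y -> #|(v r :&: v 0) :\: Y| < #|(v r :&: v 0) :\: S'| ->
       ~~ (v r :\: v 0 \subset Y) -> ~~ (v 0 :\: v r \subset Y) -> col Y = col (v r.-1).
    by move=> Y vY hY nCY nAY; rewrite cr1; apply: IH => //; rewrite setIC.
  have n2 : col S' != col (v r)
    := core vC vA vr1 v1 l1 l2 l3 l4 ar1 a1 sX1' sXr1' hr3' cov' Hm' mr' IH2 vS' nC' nA'.
  case: (cover3 (col S') c01 c12 c02) => e //.
    by rewrite e cA eqxx in n0.
  by rewrite e cC eqxx in n2.
have claim : forall j S', vert S' -> #|(v 0 :&: v r) :\: S'| <= j ->
    ~~ (v 0 :\: v r \subset S') -> ~~ (v r :\: v 0 \subset S') -> col S' = inord 1.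
  elim=> [|j IH] S' vS' hj nA' nC'; apply: step => // Y vY hY nAY nCY.
    by have := leq_trans hY hj.
  by apply: IH => //; rewrite -ltnS (leq_trans hY hj).
have := claim _ S vS (leqnn _) nA nC.
by move=> e; rewrite -e; apply: colP.
Qed.

End Main.

Theorem mainTheorem15
  (T : finType) (le : rel T) (n : nat) (G : 'I_3 -> rel 'I_n)
  (v : nat -> {set T}) (r : nat) :
  partial_order le ->
  (forall t, partial_order (G t)) ->
  (forall s t : 'I_3, s != t -> ~ poset_iso (G s) (G t)) ->
  witness le G ->
  special_path_idx le G ord0 (inord 1) (inord 2) v r ->
  (forall (w : nat -> {set T}) (k : nat), special_path le G w k -> r <= k) ->
  [set: T] = \bigcup_(i < r.+1) v i ->
  3 <= #|v 0 :\: (v 0 :&: v r)| ->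
  forall S : {set T}, gvertex le n S ->
    ~~ (v 0 :\: (v 0 :&: v r) \subset S) ->
    ~~ (v r :\: (v 0 :&: v r) \subset S) ->
    iso_to le S (G (inord 1)).
Proof.
move=> Hpo _ Hni Hwit Hsp Hmin Hun Hm S vS nA nC.
exact: (main_sec Hpo Hni Hwit Hmin Hsp Hun Hm vS nA nC).
Qed.
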